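(* Let $\sigma$ be a density operator on a finite-dimensional Hilbert space with largest eigenvalue $p_{\max}=\|\sigma\|_\infty<1$ and corresponding eigenvector $|\Phi\rangle$, and let $H$ be Hermitian. Then $$P_H(\sigma)\ge V_H(\Phi)\Big(\frac{p_{\max}^2}{1-p_{\max}}-1\Big).$$
   Context: $V_H(\Phi)=\langle\Phi|H^2|\Phi\rangle-\langle\Phi|H|\Phi\rangle^2$. Purity of coherence: $P_H(\sigma)=\mathrm{Tr}(H\sigma^2H\sigma^{-1})-\mathrm{Tr}(\sigma H^2)$ ($\sigma^{-1}$ inverse on the support) if $\mathrm{supp}(H\sigma H)\subseteq\mathrm{supp}(\sigma)$, else $\infty$. *)

(* Defs.v *)
(* matrices over an arbitrary numClosedFieldType C
   (e.g. algC); the Hilbert space is C^n, vectors are column vectors. *)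
From HB Require Import structures.
From mathcomp Require Import all_boot all_order all_algebra.
From Stdlib Require Import ClassicalEpsilon.
Set Implicit Arguments. Unset Strict Implicit. Unset Printing Implicit Defensive.
Import Order.TTheory GRing.Theory Num.Theory.
Local Open Scope ring_scope.

Section Defs.
Variable C : numClosedFieldType.

Definition dagger m n (A : 'M[C]_(m, n)) : 'M[C]_(n, m) := map_mx Num.conj (A^T).

Definition herm_mx n (A : 'M[C]_n) : Prop := dagger A = A.

Definition psd n (A : 'M[C]_n) : Prop :=
  herm_mx A /\ forall v : 'cV[C]_n, 0 <= (dagger v *m A *m v) 0 0.

Definition density n (s : 'M[C]_n) : Prop := psd s /\ \tr s = 1.

Definition expect n (A : 'M[C]_n) (v : 'cV[C]_n) : C := (dagger v *m A *m v) 0 0.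

Definition varH n (H : 'M[C]_n) (Phi : 'cV[C]_n) : C :=
  expect (H *m H) Phi - (expect H Phi) ^+ 2.

(* Moore-Penrose pseudo-inverse conditions (for Hermitian s this is the
   inverse on the support). *)
Definition is_mp_inverse n (s X : 'M[C]_n) : Prop :=
  [/\ s *m X *m s = s, X *m s *m X = X,
      dagger (s *m X) = s *m X & dagger (X *m s) = X *m s].

(* the pseudo-inverse (it exists and is unique) *)
Definition pinv n (s : 'M[C]_n) : 'M[C]_n :=
  epsilon (inhabits 0) (fun X => is_mp_inverse s X).

(* support (= range = column space) inclusion supp A ⊆ supp B,
   column spaces expressed as row spaces of transposes *)
Definition supp_sub n (A B : 'M[C]_n) : bool := (A^T <= B^T)%MS.

(* purity of coherence; None encodes +infinity *)
Definition purity n (H s : 'M[C]_n) : option C :=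
  if supp_sub (H *m s *m H) s
  then Some (\tr (H *m s *m s *m H *m pinv s) - \tr (s *m (H *m H)))
  else None.

Definition ext_ge (P : option C) (x : C) : Prop :=
  match P with None => True | Some p => x <= p end.

(* largest eigenvalue (mxalgebra's eigenvalue; spectrum of a Hermitian
   matrix is the same for row/column conventions) *)
Definition largest_eigenvalue n (s : 'M[C]_n) (p : C) : Prop :=
  eigenvalue s p /\ forall l, eigenvalue s l -> l <= p.

End Defs.

(* Main.v *)
Require Import Defs.
From HB Require Import structures.
From mathcomp Require Import all_boot all_order all_algebra.
From mathcomp Require Import ring lra.
From Stdlib Require Import ClassicalEpsilon.
Set Implicit Arguments. Unset Strict Implicit. Unset Printing Implicit Defensive.
Import Order.TTheory GRing.Theory Num.Theory.
Local Open Scope ring_scope.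

Section Help.
Variable C : numClosedFieldType.

Lemma daggerE m n (A : 'M[C]_(m, n)) : dagger A = (A ^t* )%sesqui.
Proof. by []. Qed.

Lemma dagger_entry m n (A : 'M[C]_(m, n)) i j : dagger A i j = (A j i)^*.
Proof. by rewrite !mxE. Qed.

Lemma daggerM m n p (A : 'M[C]_(m, n)) (B : 'M[C]_(n, p)) :
  dagger (A *m B) = dagger B *m dagger A.
Proof. by rewrite /dagger trmx_mul map_mxM. Qed.

Lemma daggerK m n (A : 'M[C]_(m, n)) : dagger (dagger A) = A.
Proof. by apply/matrixP=> i j; rewrite !mxE conjCK. Qed.

Lemma daggerB m n (A B : 'M[C]_(m, n)) : dagger (A - B) = dagger A - dagger B.
Proof. by apply/matrixP=> i j; rewrite !mxE rmorphB. Qed.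

Lemma daggerZ m n a (A : 'M[C]_(m, n)) : dagger (a *: A) = a^* *: dagger A.
Proof. by apply/matrixP=> i j; rewrite !mxE rmorphM. Qed.

Lemma dagger_diag n (d : 'rV[C]_n) : (forall i, d 0 i \is Num.real) ->
  dagger (diag_mx d) = diag_mx d.
Proof.
move=> hd; apply/matrixP=> i j; rewrite !mxE.
case: (eqVneq i j) => [->|hij]; first by rewrite ?eqxx !mulr1n conj_Creal.
by rewrite !mulr0n rmorph0.
Qed.

Lemma dagger_delta n (i : 'I_n) : dagger (delta_mx i (0 : 'I_1) : 'cV[C]_n) = delta_mx 0 i.
Proof.
apply/matrixP=> a b; rewrite !mxE !ord1 /=.
by case: (b == i); rewrite /= ?rmorph1 ?rmorph0.
Qed.

Lemma quad_delta n (M : 'M[C]_n) (i : 'I_n) :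
  (dagger (delta_mx i (0 : 'I_1)) *m M *m delta_mx i (0 : 'I_1)) 0 0 = M i i.
Proof. by rewrite dagger_delta -rowE -colE !mxE. Qed.

Lemma mp_unique n (A X Y : 'M[C]_n) : is_mp_inverse A X -> is_mp_inverse A Y -> X = Y.
Proof.
move=> [h1 h2 h3 h4] [k1 k2 k3 k4].
have eA1 : dagger A = dagger A *m (A *m Y) by rewrite -{1}k1 daggerM k3.
have eA2 : dagger A = (X *m A) *m dagger A by rewrite -{1}h1 -mulmxA daggerM h4.
have eX : X = X *m A *m Y.
  have eX0 : X = X *m (dagger X *m dagger A) by rewrite -daggerM h3 mulmxA h2.
  rewrite {1}eX0 {1}eA1 (mulmxA (dagger X)) -daggerM h3 !mulmxA h2 //.
have eY : Y = X *m A *m Y.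
  have eY0 : Y = dagger A *m dagger Y *m Y by rewrite -daggerM k4 k2.
  rewrite {1}eY0 {1}eA2 -(mulmxA (X *m A) (dagger A) (dagger Y)) -daggerM k4.
  by rewrite -!mulmxA (mulmxA Y) k2.
by rewrite eX -eY.
Qed.

End Help.
Section Main.
Variable C : numClosedFieldType.
Variable n : nat.

Lemma spec_setup (sigma : 'M[C]_n) : dagger sigma = sigma ->
  let U := spectralmx sigma in let d := spectral_diag sigma in
  [/\ U *m dagger U = 1%:M, dagger U *m U = 1%:M &
      sigma = dagger U *m diag_mx d *m U].
Proof.
move=> hs U d.
have Uu : U \is unitarymx by exact: spectral_unitarymx.
have hn : sigma \is normalmx by apply/normalmxP; rewrite -!daggerE hs.
split.
- exact/unitarymxP.
- by have := mulmxKtV (1%:M : 'M[C]_n) Uu erefl; rewrite mul1mx.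
- by rewrite {1}(orthomx_spectralP hn) invmx_unitary.
Qed.

Lemma conj_prod (U A B : 'M[C]_n) : U *m dagger U = 1%:M ->
  (dagger U *m A *m U) *m (dagger U *m B *m U) = dagger U *m (A *m B) *m U.
Proof.
move=> hU; rewrite -!mulmxA; congr (_ *m _); rewrite !mulmxA.
by rewrite -(mulmxA A) hU mulmx1.
Qed.

Lemma conj_tr (U A : 'M[C]_n) : U *m dagger U = 1%:M ->
  \tr (dagger U *m A *m U) = \tr A.
Proof. by move=> hU; rewrite mxtrace_mulC mulmxA hU mul1mx. Qed.

Lemma conj_prod2 (U A B : 'M[C]_n) : dagger U *m U = 1%:M ->
  (U *m A *m dagger U) *m (U *m B *m dagger U) = U *m (A *m B) *m dagger U.
Proof.
move=> hU; rewrite -!mulmxA; congr (_ *m _); rewrite !mulmxA.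
by rewrite -(mulmxA A) hU mulmx1.
Qed.

Lemma entryB p q (A B : 'M[C]_(p, q)) i j : (A - B) i j = A i j - B i j.
Proof. by rewrite !mxE. Qed.
Lemma entryD p q (A B : 'M[C]_(p, q)) i j : (A + B) i j = A i j + B i j.
Proof. by rewrite !mxE. Qed.
Lemma entryN p q (A : 'M[C]_(p, q)) i j : (- A) i j = - A i j.
Proof. by rewrite !mxE. Qed.
Lemma entryZ p q a (A : 'M[C]_(p, q)) i j : (a *: A) i j = a * A i j.
Proof. by rewrite !mxE. Qed.

Lemma quad_ge0 (w : 'cV[C]_n) : 0 <= (dagger w *m w) 0 0.
Proof.
rewrite mxE; apply: sumr_ge0 => k _; rewrite dagger_entry mulrC.
exact: mul_conjC_ge0.
Qed.

Lemma varH_ge0 (H : 'M[C]_n) (Phi : 'cV[C]_n) : herm_mx H ->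
  (dagger Phi *m Phi) 0 0 = 1 -> 0 <= varH H Phi.
Proof.
move=> hH hn.
set mu := expect H Phi.
set w := H *m Phi - mu *: Phi.
suff -> : varH H Phi = (dagger w *m w) 0 0 by apply: quad_ge0.
have hw : dagger w = dagger Phi *m H - mu^* *: dagger Phi.
  by rewrite /w daggerB daggerZ daggerM hH.
have -> : dagger w *m w = dagger Phi *m (H *m H) *m Phi
   - mu *: (dagger Phi *m H *m Phi) - mu^* *: (dagger Phi *m H *m Phi)
   + (mu^* * mu) *: (dagger Phi *m Phi).
  rewrite hw /w mulmxBl !mulmxBr -!scalemxAl -!scalemxAr !mulmxA scalerA.
  by rewrite opprB addrA [X in X = _]addrAC.
rewrite !(entryD, entryB, entryN, entryZ) hn /varH /expect.
have hmu : (dagger Phi *m H *m Phi) 0 0 = mu by [].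
rewrite hmu; clearbody mu; ring.
Qed.

Lemma quad_scaled (M : 'M[C]_n) (k : C) (m : 'I_n) :
  (dagger (k *: delta_mx m (0 : 'I_1)) *m M *m (k *: delta_mx m (0 : 'I_1))) 0 0
   = k^* * k * M m m.
Proof.
by rewrite daggerZ -scalemxAl -scalemxAr entryZ -scalemxAl entryZ quad_delta mulrA [k * _]mulrC.
Qed.

End Main.
Theorem mainTheorem17 (C : numClosedFieldType) (n : nat)
    (sigma H : 'M[C]_n) (pmax : C) (Phi : 'cV[C]_n) :
  density sigma ->
  largest_eigenvalue sigma pmax ->
  pmax < 1 ->
  sigma *m Phi = pmax *: Phi ->
  (dagger Phi *m Phi) 0 0 = 1 ->
  herm_mx H ->
  ext_ge (purity H sigma) (varH H Phi * (pmax ^+ 2 / (1 - pmax) - 1)).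
Proof.
move=> [[hs psd] tr1] _ hp1 hPhi hnorm hH.
rewrite /ext_ge /purity; case: ifP => // hsupp.
have [UUd UdU hsig] := spec_setup hs.
set U := spectralmx sigma in UUd UdU hsig.
set d := spectral_diag sigma in hsig.
set D := diag_mx d in hsig.
have d_ge0 : forall i, 0 <= d 0 i.
  move=> i; have := psd (dagger U *m delta_mx i (0:'I_1)).
  rewrite daggerM daggerK hsig.
  have -> : dagger (delta_mx i (0:'I_1)) *m U *m (dagger U *m D *m U) *m (dagger U *m delta_mx i (0:'I_1))
     = dagger (delta_mx i (0:'I_1)) *m D *m delta_mx i (0:'I_1).
    rewrite !mulmxA -(mulmxA _ U (dagger U)) UUd mulmx1.
    by rewrite -(mulmxA _ U (dagger U)) UUd mulmx1.
  by rewrite quad_delta /D !mxE eqxx mulr1n.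
have d_real : forall i, d 0 i \is Num.real by move=> i; exact: ger0_real.
have sum_d : \sum_i d 0 i = 1.
  by rewrite -tr1 hsig conj_tr // mxtrace_diag.
set G := U *m H *m dagger U.
have hG : dagger G = G by rewrite /G !daggerM daggerK hH mulmxA.
have Gji : forall i j, G j i = (G i j)^*.
  by move=> i j; rewrite -{1}hG dagger_entry.
have hHG : H = dagger U *m G *m U.
  by rewrite /G !mulmxA UdU mul1mx -mulmxA UdU mulmx1.
set e := map_mx GRing.inv d.
set E := diag_mx e.
have e_real : forall i, e 0 i \is Num.real by move=> i; rewrite mxE rpredV.
have hD : dagger D = D by apply: dagger_diag.
have hE : dagger E = E by apply: dagger_diag.
have DED : D *m E *m D = D.
  apply/matrixP=> i j; rewrite /D /E !mul_diag_mx !mul_mx_diag !mxE.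
  case: (eqVneq i j) => [->|hij]; last by rewrite !mulr0n !mulr0 mul0r.
  rewrite ?eqxx !mulr1n; case: (eqVneq (d 0 j) 0) => [->|hz]; first by rewrite !mul0r.
  by rewrite mulrV ?unitfE // mul1r.
have EDE : E *m D *m E = E.
  apply/matrixP=> i j; rewrite /D /E !mul_diag_mx !mul_mx_diag !mxE.
  case: (eqVneq i j) => [->|hij]; last by rewrite !mulr0n !mulr0 mul0r.
  rewrite ?eqxx !mulr1n; case: (eqVneq (d 0 j) 0) => [->|hz]; first by rewrite invr0 !mul0r.
  by rewrite mulVr ?unitfE // mul1r.
have DEc : D *m E = E *m D.
  apply/matrixP=> i j; rewrite /D /E !mul_diag_mx !mxE.
  case: (eqVneq i j) => [->|hij]; last by rewrite !mulr0n !mulr0.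
  by rewrite mulrC.
set X0 := dagger U *m E *m U.
have hpinv : pinv sigma = X0.
  have mpX0 : is_mp_inverse sigma X0.
    split.
    - by rewrite hsig /X0 !conj_prod // DED.
    - by rewrite hsig /X0 !conj_prod // EDE.
    - by rewrite hsig /X0 !conj_prod // !daggerM daggerK hD hE DEc mulmxA.
    - by rewrite hsig /X0 !conj_prod // !daggerM daggerK hD hE -DEc mulmxA.
  have hp := epsilon_spec (inhabits (0:'M[C]_n)) (fun X => is_mp_inverse sigma X) (ex_intro _ X0 mpX0).
  exact: mp_unique hp mpX0.
have hDs : D = U *m sigma *m dagger U.
  by rewrite hsig !mulmxA UUd mul1mx -mulmxA UUd mulmx1.
have suppz : forall i j, d 0 i = 0 -> d 0 j != 0 -> G i j = 0.
  have [N hN] := submxP hsupp.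
  have hN' : H *m sigma *m H = sigma *m N^T by rewrite -[LHS]trmxK hN trmx_mul trmxK.
  have GDG : G *m D *m G = D *m (U *m N^T *m dagger U).
    by rewrite hDs /G !conj_prod2 // hN'.
  move=> i j di0 dj0.
  have : (G *m D *m G) i i = 0 by rewrite GDG /D mul_diag_mx mxE di0 mul0r.
  rewrite mxE => hsum.
  have hterm : forall k, (G *m D) i k * G k i = d 0 k * (G i k * (G i k)^*).
    by move=> k; rewrite /D mul_mx_diag mxE (Gji i k) mulrAC mulrC.
  have hz := @psumr_eq0P _ _ (fun=> true) (fun k => d 0 k * (G i k * (G i k)^*)).
  have hsum0 : \sum_k d 0 k * (G i k * (G i k)^*) = 0.
    by rewrite -[X in _ = X]hsum; apply: eq_bigr => k _; rewrite hterm.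
  have /eqP := hz (fun k _ => mulr_ge0 (d_ge0 k) (mul_conjC_ge0 _)) hsum0 j isT.
  by rewrite mulf_eq0 (negPf dj0) /= mul_conjC_eq0 => /eqP.
clearbody G.
set a := fun i j => G i j * G j i.
set c := fun i j => d 0 j * d 0 j * e 0 i - d 0 i.
have hP : \tr (H *m sigma *m sigma *m H *m pinv sigma) - \tr (sigma *m (H *m H))
    = \sum_i \sum_j a i j * c i j.
  rewrite hpinv /X0 hHG hsig !conj_prod // !conj_tr //.
  rewrite /mxtrace -sumrB; apply: eq_bigr => i _.
  rewrite /E mul_mx_diag /D mul_diag_mx !mxE big_distrl big_distrr -sumrB.
  apply: eq_bigr => j _; rewrite mul_mx_diag mxE mul_mx_diag mxE /a /c /e !mxE /=; ring.
rewrite hP.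
have a_ge0 : forall i j, 0 <= a i j.
  by move=> i j; rewrite /a (Gji i j); exact: mul_conjC_ge0.
have a_sym : forall i j, a i j = a j i by move=> i j; rewrite /a mulrC.
set s := fun i j => a i j * (c i j + c j i).
have s_sym : forall i j, s i j = s j i by move=> i j; rewrite /s a_sym addrC.
have h2P : (\sum_i \sum_j a i j * c i j) *+ 2 = \sum_i \sum_j s i j.
  rewrite mulr2n [X in _ + X]exchange_big /= -big_split; apply: eq_bigr => i _.
  rewrite -big_split; apply: eq_bigr => j _ /=.
  by rewrite /s (a_sym j i) -mulrDr.
have s_ge0 : forall i j, 0 <= s i j.
  move=> i j; rewrite /s /c /e !mxE.
  case: (eqVneq (d 0 i) 0) => [di0|di0].
    case: (eqVneq (d 0 j) 0) => [dj0|dj0].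
      by rewrite di0 dj0 !mul0r !subrr addr0 mulr0.
    by rewrite /a (suppz i j di0 dj0) !mul0r.
  case: (eqVneq (d 0 j) 0) => [dj0|dj0].
    by rewrite /a (suppz j i dj0 di0) !mulr0 mul0r.
  apply: mulr_ge0; first exact: a_ge0.
  have -> : d 0 j * d 0 j * (d 0 i)^-1 - d 0 i + (d 0 i * d 0 i * (d 0 j)^-1 - d 0 j)
     = (d 0 i + d 0 j) * (d 0 i - d 0 j) ^+ 2 / (d 0 i * d 0 j).
    by field; rewrite di0 dj0.
  apply: divr_ge0; last exact: mulr_ge0 (d_ge0 i) (d_ge0 j).
  apply: mulr_ge0; first exact: addr_ge0 (d_ge0 i) (d_ge0 j).
  by apply: real_exprn_even_ge0; rewrite ?rpredB.
have Pge0 : 0 <= \sum_i \sum_j a i j * c i j.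
  rewrite -(pmulrn_lge0 _ (isT : (0 < 2)%N)) h2P.
  by apply: sumr_ge0 => i _; apply: sumr_ge0 => j _.
have pr : pmax \is Num.real by rewrite (ler_real (ltW hp1)) real1.
set K := pmax ^+ 2 / (1 - pmax) - 1.
have Kr : K \is Num.real.
  by rewrite rpredB ?real1 // rpredM ?rpredX ?rpredV ?rpredB ?real1.
case/orP: (real_leVge Kr (real0 _)) => [Kle0|Kge0].
  apply: le_trans Pge0; rewrite mulrC; apply: mulr_le0_ge0 => //.
  exact: varH_ge0.
case: (eqVneq K 0) => [K0|Kn0]; first by rewrite K0 mulr0.
have Kgt0 : 0 < K by rewrite lt_def Kn0 Kge0.
set phi := U *m Phi.
have hphi : D *m phi = pmax *: phi.
  by rewrite hDs /phi -!mulmxA (mulmxA (dagger U) U) UdU mul1mx hPhi scalemxAr.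
have nphi : (dagger phi *m phi) 0 0 = 1.
  by rewrite /phi daggerM -mulmxA (mulmxA (dagger U)) UdU mul1mx.
have phiE : phi = U *m Phi by [].
clearbody phi.
have [m hm] : exists m, phi m 0 != 0.
  case: (pickP (fun m => phi m 0 != 0)) => [m hm|hnone]; first by exists m.
  have phi0 : phi = 0.
    apply/matrixP=> i k; rewrite ord1 [in RHS]mxE.
    by move: (hnone i) => /negbFE/eqP.
  by move: nphi; rewrite phi0 mulmx0 mxE => /eqP; rewrite eq_sym oner_eq0.
have dm : d 0 m = pmax.
  have := congr1 (fun M : 'cV[C]_n => M m 0) hphi.
  by rewrite /D mul_diag_mx !mxE; apply: mulIf.
have p_ge0 : 0 <= pmax by rewrite -dm.
have K1 : 1 - pmax < pmax ^+ 2.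
  have h1p : 0 < 1 - pmax by rewrite subr_gt0.
  by move: Kgt0; rewrite /K subr_gt0 ltr_pdivlMr // mul1r.
have p2p : pmax ^+ 2 <= pmax.
  rewrite expr2 -[X in _ <= X]mulr1; apply: ler_wpM2l => //; exact: ltW.
have hlt : 1 - pmax < pmax by apply: lt_le_trans p2p.
have h1p : 0 < 1 - pmax by rewrite subr_gt0.
have p_gt0 : 0 < pmax by apply: lt_trans hlt.
have dj_le : forall j, j != m -> d 0 j <= 1 - pmax.
  move=> j hj; rewrite -sum_d (bigD1 m) //= (bigD1 j) //= dm.
  rewrite addrAC subrr add0r lerDl; apply: sumr_ge0 => i _; exact: d_ge0.
have phi_j0 : forall j, j != m -> phi j 0 = 0.
  move=> j hj; have := congr1 (fun M : 'cV[C]_n => M j 0) hphi.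
  rewrite /D mul_diag_mx !mxE => /eqP; rewrite -subr_eq0 -mulrBl mulf_eq0.
  case/orP => [|/eqP //]; rewrite subr_eq0 => /eqP hd.
  by have := le_lt_trans (dj_le j hj) hlt; rewrite hd ltxx.
have phiD : phi = phi m 0 *: delta_mx m (0 : 'I_1).
  apply/matrixP=> i k; rewrite ord1 !mxE.
  case: (eqVneq i m) => [->|him]; first by rewrite ?eqxx /= mulr1.
  by rewrite phi_j0 // mulr0.
have hpm : (phi m 0)^* * phi m 0 = 1.
  have h := quad_scaled 1%:M (phi m 0) m.
  by rewrite -phiD mulmx1 nphi mxE eqxx mulr1 in h.
have transf : forall M, (dagger Phi *m (dagger U *m M *m U) *m Phi) 0 0 = M m m.
  move=> M; have -> : dagger Phi *m (dagger U *m M *m U) *m Phi = dagger phi *m M *m phi.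
    by rewrite phiE daggerM !mulmxA.
  by rewrite phiD quad_scaled hpm mul1r.
have hV : varH H Phi = \sum_(j | j != m) a m j.
  rewrite /varH /expect hHG conj_prod // !transf mxE.
  by rewrite (bigD1 m) //= -expr2 addrAC subrr add0r.
have dmn : d 0 m != 0 by rewrite dm lt0r_neq0.
have key : forall j, j != m -> a m j * K <= s m j.
  move=> j hj; rewrite /s.
  case: (eqVneq (d 0 j) 0) => [dj0|dj0].
    by rewrite /a (suppz j m dj0 dmn) mulr0 !mul0r.
  have xgt0 : 0 < d 0 j by rewrite lt_def dj0 d_ge0.
  apply: ler_wpM2l; first exact: a_ge0.
  rewrite -subr_ge0 /c /e !mxE dm.
  have -> : d 0 j * d 0 j * pmax^-1 - pmax + (pmax * pmax * (d 0 j)^-1 - d 0 j) - K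
     = pmax ^+ 2 * ((d 0 j)^-1 - (1 - pmax)^-1) + d 0 j * d 0 j / pmax + (1 - pmax - d 0 j).
    rewrite /K; field.
    by rewrite dj0 lt0r_neq0 //= subr_eq0 eq_sym lt_eqF.
  apply: addr_ge0; first apply: addr_ge0.
  - apply: mulr_ge0; first exact: exprn_ge0.
    by rewrite subr_ge0 lef_pV2 ?posrE // dj_le.
  - by apply: divr_ge0 => //; apply: mulr_ge0; exact: d_ge0.
  - by rewrite subr_ge0 dj_le.
rewrite hV big_distrl /=.
apply: (@le_trans _ _ (\sum_(j | j != m) s m j)); first exact: ler_sum.
suff h : (\sum_(j | j != m) s m j) *+ 2 <= (\sum_i \sum_j a i j * c i j) *+ 2.
  by rewrite lerMn2r in h.
rewrite h2P mulr2n [X in _ <= X](bigD1 m) //=; apply: lerD.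
  by rewrite [X in _ <= X](bigD1 m) //= lerDr.
apply: ler_sum => i hi; rewrite (s_sym m i) (bigD1 m) //= lerDl.
by apply: sumr_ge0.
Qed.
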